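(* Let $d\ge1$, let $a_{-d},\dots,a_d\in\mathbb{C}$ with $a_{-k}=\overline{a_k}$ and $a_d\ne0$, let $b=(b(n))_{n\in\mathbb{Z}}$ be a bounded real sequence, and let $L$ be the operator on $\ell^2(\mathbb{Z})$ given by $(Lu)(n)=\sum_{k=-d}^da_ku(n+k)+b(n)u(n)$. If $u,v\in\ell^2(\mathbb{Z})$ satisfy $Lu=Eu$ and $Lv=Ev$ for the same eigenvalue $E$, then the vectors $U=\begin{pmatrix}\vec u(1)\\\vec u(0)\end{pmatrix}$ and $V=\begin{pmatrix}\vec v(1)\\\vec v(0)\end{pmatrix}$ in $\mathbb{C}^{2d}$ are symplectically orthogonal with respect to $S$, i.e. $U^*SV=0$.
   Context: For a sequence $u$, $\vec u(n)=(u(nd+d-1),\dots,u(nd+1),u(nd))^T\in\mathbb{C}^d$. $C$ is the $d\times d$ upper triangular matrix with first row $(a_d,a_{d-1},\dots,a_1)$, i.e. $C_{ij}=a_{d-j+i}$ for $j\ge i$ and $0$ for $j<i$, and $S=\begin{pmatrix}0&-C^*\\C&0\end{pmatrix}$. *)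

(* Defs.v *)
From HB Require Import structures.
From mathcomp Require Import all_boot all_order all_algebra.
From mathcomp Require Import reals.
From mathcomp Require Import complex.
Set Implicit Arguments. Unset Strict Implicit. Unset Printing Implicit Defensive.
Import Order.TTheory GRing.Theory Num.Theory.
Local Open Scope ring_scope.

Section Defs.
Variable R : realType.
Local Notation C := R[i].

Definition in_l2 (u : int -> C) : Prop :=
  exists M : R, forall N : nat,
    \sum_(i < (N + N).+1) (@complex.Re R (u (i%:Z - N%:Z)) ^+ 2 + @complex.Im R (u (i%:Z - N%:Z)) ^+ 2) <= M.

Definition bounded_seq (b : int -> R) : Prop :=
  exists B : R, forall n, `|b n| <= B.

Definition Lop (d : nat) (a : int -> C) (b : int -> R) (u : int -> C) (n : int) : C :=
  \sum_(i < (d + d).+1) a (i%:Z - d%:Z) * u (n + (i%:Z - d%:Z))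
  + real_complex R (b n) * u n.

(* vec u n = (u(nd+d-1), ..., u(nd+1), u(nd))^T ; entry i (0-based) is u(nd + d-1-i) *)
Definition vecu (d : nat) (u : int -> C) (n : int) : 'cV[C]_d :=
  \col_(i < d) u (n * d%:Z + (d%:Z - 1 - i%:Z)).

Definition Cmx (d : nat) (a : int -> C) : 'M[C]_d :=
  \matrix_(i < d, j < d) (if (i <= j)%N then a (d%:Z - j%:Z + i%:Z) else 0).

Definition adjmx (m n : nat) (A : 'M[C]_(m, n)) : 'M[C]_(n, m) :=
  (map_mx Num.conj A)^T.

Definition Smx (d : nat) (a : int -> C) : 'M[C]_(d + d) :=
  block_mx 0 (- adjmx (Cmx d a)) (Cmx d a) 0.

Definition Uvec (d : nat) (u : int -> C) : 'cV[C]_(d + d) :=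
  col_mx (vecu d u 1) (vecu d u 0).

End Defs.

(* Main.v *)
From HB Require Import structures.
From mathcomp Require Import all_boot all_order all_algebra.
From mathcomp Require Import reals complex.
Require Import Defs.
From mathcomp Require Import ring lra zify.
Import Order.TTheory GRing.Theory Num.Theory.
Local Open Scope ring_scope.
Section L2.
Variable R : realType.
Lemma l2_sub (phi : int -> R) M : (forall n, 0 <= phi n) ->
  (forall N : nat, \sum_(i < (N + N).+1) phi (i%:Z - N%:Z) <= M) ->
  forall s (L : nat), \sum_(n < L) phi (s + n%:Z) <= M.
Proof.
move=> h0 hM s L.
set N := (absz s + L)%N.
set t := absz (s + N%:Z).
have ht : t%:Z = s + N%:Z by rewrite /t /N; lia.
apply: le_trans (hM N).
rewrite -(big_mkord (fun _ => true) (fun i => phi (i%:Z - N%:Z))).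
rewrite (@big_cat_nat _ _ _ t 0 (N+N).+1) //=; last by rewrite /t /N; lia.
rewrite (@big_cat_nat _ _ _ (t + L) t (N+N).+1) //=; last by rewrite /t /N; lia.
  apply: ler_wpDl; first by apply: sumr_ge0.
  rewrite -[X in X <= _]addr0; apply: lerD; last by apply: sumr_ge0.
  rewrite -{1}[t]add0n big_addn addKn big_mkord le_eqVlt; apply/orP; left; apply/eqP.
  by apply: eq_bigr => i _; congr phi; lia.
by rewrite leq_addr.
Qed.

Lemma l2C (w : int -> R[i]) : in_l2 w ->
  exists M : R[i], forall s (L : nat), \sum_(n < L) `|w (s + n%:Z)| ^+ 2 <= M.
Proof.
case=> M hM; exists (real_complex R M) => s L.
have := @l2_sub (fun n => complex.Re (w n) ^+ 2 + complex.Im (w n) ^+ 2) M _ hM s L.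
rewrite -lecR => h; apply: le_trans (h _); last by move=> n; rewrite addr_ge0 ?sqr_ge0.
rewrite rmorph_sum le_eqVlt; apply/orP; left; apply/eqP; apply: eq_bigr => n _.
exact: (esym (add_Re2_Im2 _)).
Qed.

Lemma archR (r rb : R) : 0 <= r -> (forall K : nat, r *+ K <= rb) -> r = 0.
Proof.
move=> hr hK; apply/eqP; rewrite eq_le hr andbT leNgt; apply/negP => hr0.
have hb : 0 <= rb / r by have := hK 0%N; rewrite mulr0n => h; rewrite divr_ge0 // ltW.
have := archi_boundP hb.
set K := Num.Def.archi_bound _ => h2.
have h1 := hK K; rewrite -mulr_natr in h1.
have h3 : rb / r * r < K%:R * r by rewrite ltr_pM2r.
rewrite divfK ?gt_eqF // in h3.
rewrite mulrC in h3; lra.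
Qed.

Lemma arch (x B : R[i]) : 0 <= x -> (forall K : nat, x *+ K <= B) -> x = 0.
Proof.
move=> hx hK.
have hB : 0 <= B by have := hK 0%N; rewrite mulr0n.
move: (hx) (hB); rewrite !lecE /= => /andP[/eqP hx1 hx2] /andP[/eqP hB1 hB2].
have ex : x = real_complex R (complex.Re x).
  by rewrite [LHS]complexE hx1 mulr0 addr0.
have eB : B = real_complex R (complex.Re B).
  by rewrite [LHS]complexE hB1 mulr0 addr0.
suff h : complex.Re x = 0 by rewrite ex h.
apply: (@archR _ (complex.Re B) hx2) => K.
rewrite -lecR -eB.
have -> : real_complex R (complex.Re x *+ K) = x *+ K by rewrite [in RHS]ex; exact: rmorphMn.
exact: hK.
Qed.
End L2.

Section W.
Variable R : realType.
Local Notation C := R[i].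
Variable d : nat.

Definition Ts (f : int -> int -> C) (m : int) : C :=
  \sum_(k < d) \sum_(i < k.+1) f (m - 1 - i%:Z) (k.+1)%:Z.

Lemma Ts_diff f m : Ts f (m + 1) - Ts f m =
  \sum_(k < d) f m (k.+1)%:Z - \sum_(k < d) f (m - (k.+1)%:Z) (k.+1)%:Z.
Proof.
rewrite /Ts -!sumrB; apply: eq_bigr => k _.
set K := (k.+1)%:Z.
have E1 : \sum_(i < k.+1) f (m + 1 - 1 - i%:Z) K = \sum_(i < k.+1) f (m - i%:Z) K.
  by apply: eq_bigr => i _; congr f; ring.
have E2 : \sum_(i < k.+1) f (m - 1 - i%:Z) K = \sum_(i < k.+1) f (m - (i.+1)%:Z) K.
  by apply: eq_bigr => i _; congr f; lia.
rewrite E1 E2 big_ord_recl big_ord_recr /= subr0.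
have E3 : \sum_(i < k) f (m - (bump 0 i)%:Z) K = \sum_(i < k) f (m - (i.+1)%:Z) K.
  by apply: eq_bigr => i _; rewrite /bump add1n.
rewrite E3; ring.
Qed.

Lemma conv_aux (i : nat) (F : int -> C) : (i < d)%N ->
  \sum_(j < d) (if (i <= j)%N then F (d%:Z - j%:Z + i%:Z) else 0) =
  \sum_(j < d) (if (i <= j)%N then F (j.+1)%:Z else 0).
Proof.
move=> id.
rewrite -(big_mkord (fun _ => true) (fun j => if (i <= j)%N then F (d%:Z - j%:Z + i%:Z) else 0)).
rewrite -(big_mkord (fun _ => true) (fun j => if (i <= j)%N then F (j.+1)%:Z else 0)).
rewrite !(@big_cat_nat _ _ _ i 0 d) /=; try exact: (ltnW id).
congr (_ + _); first by apply: eq_big_nat => j /andP[_ h]; rewrite leqNgt h.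
rewrite big_nat_rev /=; apply: eq_big_nat => j /andP[h1 h2]; rewrite h1.
have h3 : (i <= i + d - j.+1)%N by rewrite -addnBA // leq_addr.
rewrite h3; congr F.
  by rewrite -addnBA // PoszD subzn; lia.
all: by [].
Qed.

Lemma conv (phi : nat -> int -> C) :
  \sum_(i < d) \sum_(j < d) (if (i <= j)%N then phi i (d%:Z - j%:Z + i%:Z) else 0) =
  \sum_(k < d) \sum_(i < k.+1) phi i (k.+1)%:Z.
Proof.
transitivity (\sum_(i < d) \sum_(j < d) (if (i <= j)%N then phi i (j.+1)%:Z else 0)).
  by apply: eq_bigr => i _; rewrite (@conv_aux i (phi i) (ltn_ord i)).
rewrite exchange_big /=; apply: eq_big => // k _.
rewrite (big_ord_widen _ (fun i => phi i (k.+1)%:Z) (ltn_ord k)) [RHS]big_mkcond /=.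
by apply: eq_bigr => i _; rewrite ltnS.
Qed.

Variable a : int -> C.
Definition fF (u v : int -> C) (p k : int) := (u p)^* * a k * v (p + k).
Definition gG (u v : int -> C) (p k : int) := (u (p + k))^* * (a k)^* * v p.
Definition W u v m := Ts (fF u v) m - Ts (gG u v) m.

Lemma entry u v : adjmx (Uvec d u) *m Smx d a *m Uvec d v = (W u v d%:Z)%:M.
Proof.
rewrite /Uvec /Smx /adjmx map_col_mx tr_col_mx mul_row_block mul_row_col.
rewrite !mulmx0 add0r addr0.
apply/matrixP => i0 j0; rewrite !ord1 !mxE eqxx mulr1n /W.
congr (_ + _).
- rewrite /Ts -(conv (fun i k => fF u v (d%:Z - 1 - i%:Z) k)).
  under eq_bigr => j _ do rewrite mxE mulr_suml.
  rewrite exchange_big /=; apply: eq_bigr => i _; apply: eq_bigr => j _.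
  rewrite !mxE /fF; case: ifP => _; last by rewrite mulr0 mul0r.
  rewrite mul0r add0r mul1r; congr (_ * _ * v _); ring.
- rewrite /Ts -(conv (fun i k => gG u v (d%:Z - 1 - i%:Z) k)).
  rewrite -sumrN; apply: eq_bigr => j _; rewrite mxE mulr_suml -sumrN.
  apply: eq_bigr => i _; rewrite !mxE /gG; case: ifP => _; last first.
    by rewrite rmorph0; ring.
  rewrite mulrN mulNr; congr (- _); congr (_ * _ * _).
    by congr (_ ^*); congr u; ring.
  by congr v; ring.
Qed.

Lemma Lsplit b w m : Lop d a b w m =
  \sum_(k < d) a (- (k.+1)%:Z) * w (m - (k.+1)%:Z) + a 0 * w m
  + \sum_(k < d) a (k.+1)%:Z * w (m + (k.+1)%:Z) + real_complex R (b m) * w m.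
Proof.
rewrite /Lop; congr (_ + _).
rewrite -addnS big_split_ord /= big_ord_recl /= addrA; congr (_ + _ + _).
- rewrite (reindex_inj rev_ord_inj) /=; apply: eq_bigr => i _.
  have := ltn_ord i; rewrite subnS => hi; congr (a _ * w _); lia.
- by rewrite addn0 subrr addr0.
- by apply: eq_bigr => i _; rewrite /bump add1n; congr (a _ * w _); lia.
Qed.

Hypothesis ha : forall k : int, -(d%:Z) <= k <= d%:Z -> a (- k) = (a k)^*.

Lemma haS (k : 'I_d) : a (- (k.+1)%:Z) = (a (k.+1)%:Z)^*.
Proof. apply: ha; have := ltn_ord k; move=> h; apply/andP; split; lia. Qed.

Lemma haS' (k : 'I_d) : (a (- (k.+1)%:Z))^* = a (k.+1)%:Z.
Proof. by rewrite haS conjCK. Qed.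

Lemma ha0 : (a 0)^* = a 0.
Proof. have h : a (- 0) = (a 0)^*.
 apply: ha. by rewrite oppr_le0 andbb.
by rewrite -h oppr0. Qed.

Lemma Wdiff b E u v m : Lop d a b u m = E * u m -> Lop d a b v m = E * v m ->
  W u v (m + 1) - W u v m = (E - E^*) * ((u m)^* * v m).
Proof.
move=> Hu Hv.
have hv := Lsplit b v m; rewrite Hv in hv.
have hu := Lsplit b u m; rewrite Hu in hu.
rewrite /W.
have -> : forall x y z t : C, (x - y) - (z - t) = (x - z) - (y - t) by move=> *; ring.
rewrite !Ts_diff /fF /gG.
have t1 : \sum_(k < d) (u m)^* * a (k.+1)%:Z * v (m + (k.+1)%:Z) =
   (u m)^* * \sum_(k < d) a (k.+1)%:Z * v (m + (k.+1)%:Z).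
  by rewrite mulr_sumr; apply: eq_bigr => k _; rewrite mulrA.
have t2 : \sum_(k < d) (u (m - (k.+1)%:Z))^* * a (k.+1)%:Z * v (m - (k.+1)%:Z + (k.+1)%:Z) =
   (\sum_(k < d) a (- (k.+1)%:Z) * u (m - (k.+1)%:Z))^* * v m.
  rewrite rmorph_sum /= mulr_suml; apply: eq_bigr => k _.
  by rewrite rmorphM /= haS' subrK [a _ * _]mulrC.
have t3 : \sum_(k < d) (u (m + (k.+1)%:Z))^* * (a (k.+1)%:Z)^* * v m =
   (\sum_(k < d) a (k.+1)%:Z * u (m + (k.+1)%:Z))^* * v m.
  rewrite rmorph_sum /= mulr_suml; apply: eq_bigr => k _.
  by rewrite rmorphM /= [(a _)^* * _]mulrC.
have t4 : \sum_(k < d) (u (m - (k.+1)%:Z + (k.+1)%:Z))^* * (a (k.+1)%:Z)^* * v (m - (k.+1)%:Z) =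
   (u m)^* * \sum_(k < d) a (- (k.+1)%:Z) * v (m - (k.+1)%:Z).
  rewrite mulr_sumr; apply: eq_bigr => k _.
  by rewrite subrK -haS mulrA.
rewrite t1 t2 t3 t4.
set Pv := \sum_(k < d) a (k.+1)%:Z * v (m + (k.+1)%:Z) in hv *.
set Qv := \sum_(k < d) a (- (k.+1)%:Z) * v (m - (k.+1)%:Z) in hv *.
set Pu := \sum_(k < d) a (k.+1)%:Z * u (m + (k.+1)%:Z) in hu *.
set Qu := \sum_(k < d) a (- (k.+1)%:Z) * u (m - (k.+1)%:Z) in hu *.
have -> : Pv = E * v m - Qv - a 0 * v m - real_complex R (b m) * v m by rewrite hv; ring.
have -> : Pu = E * u m - Qu - a 0 * u m - real_complex R (b m) * u m by rewrite hu; ring.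
have hb : (real_complex R (b m))^* = real_complex R (b m) by exact: conjc_real.
rewrite !rmorphB !rmorphM /= ha0 hb; ring.
Qed.

Lemma Wsum b E u v (Hu : forall n, Lop d a b u n = E * u n)
  (Hv : forall n, Lop d a b v n = E * v n) m (n : nat) :
  W u v (m + n%:Z) - W u v m = (E - E^*) * \sum_(i < n) (u (m + i%:Z))^* * v (m + i%:Z).
Proof.
elim: n => [|n IH]; first by rewrite big_ord0 addr0 subrr mulr0.
rewrite big_ord_recr /= mulrDr -IH -(@Wdiff b E u v (m + n%:Z) (Hu _) (Hv _)).
have -> : m + n.+1%:Z = m + n%:Z + 1 by rewrite -addn1 PoszD addrA.
ring.
Qed.

Lemma normM_le (x y : C) : `|x| * `|y| <= `|x| ^+ 2 + `|y| ^+ 2.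
Proof.
rewrite !normc_def -!rmorphXn -rmorphM -rmorphD lecR.
set s := Num.sqrt _; set t := Num.sqrt _.
nra.
Qed.

Lemma single n (F : 'I_n -> C) j : (forall i, 0 <= F i) -> F j <= \sum_i F i.
Proof.
move=> h; rewrite (bigD1 j) //= lerDl; apply: sumr_ge0 => i _; exact: h.
Qed.

Definition Om (w : int -> C) (m : int) := \sum_(j < d + d) `|w (m - d%:Z + j%:Z)| ^+ 2.

Lemma win1 (w : int -> C) m p : m - d%:Z <= p -> p < m + d%:Z -> `|w p| ^+ 2 <= Om w m.
Proof.
move=> h1 h2.
have hj : (absz (p - (m - d%:Z))%R < d + d)%N by lia.
have -> : p = m - d%:Z + (Ordinal hj : nat)%:Z by rewrite /=; lia.
apply: (@single (d + d) (fun j : 'I_(d + d) => `|w (m - d%:Z + (nat_of_ord j)%:Z)| ^+ 2) (Ordinal hj)) => i.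
by rewrite exprn_ge0.
Qed.

Definition Asum := \sum_(k < d) `|a (k.+1)%:Z|.

Lemma mulrn_le (x : C) m n : 0 <= x -> (m <= n)%N -> x *+ m <= x *+ n.
Proof. by move=> hx h; rewrite -(subnK h) mulrnDr lerDr mulrn_wge0. Qed.

Lemma Tsbound f m B : 0 <= B ->
  (forall (k : 'I_d) (i : 'I_k.+1), `|f (m - 1 - i%:Z) (k.+1)%:Z| <= `|a (k.+1)%:Z| * B) ->
  `|Ts f m| <= (Asum * B) *+ d.
Proof.
move=> hB h; rewrite /Ts /Asum mulr_suml -sumrMnl.
apply: (le_trans (ler_norm_sum _ _ _)); apply: ler_sum => k _.
apply: (le_trans (ler_norm_sum _ _ _)).
apply: (le_trans (ler_sum _ (fun i _ => h k i))).
rewrite sumr_const card_ord; apply: mulrn_le; first by rewrite mulr_ge0.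
exact: ltn_ord.
Qed.

Lemma Wbound u v m : `|W u v m| <= (Asum * (Om u m + Om v m)) *+ (d + d).
Proof.
have hB : 0 <= Om u m + Om v m by rewrite addr_ge0 // sumr_ge0 // => i _; rewrite exprn_ge0.
rewrite /W mulrnDr; apply: (le_trans (ler_normB _ _)); apply: lerD; apply: Tsbound => // k i.
- rewrite /fF !normrM norm_conjC [`|u _| * _]mulrC -mulrA ler_wpM2l //.
  apply: (le_trans (normM_le _ _)); apply: lerD; apply: win1;
  have := ltn_ord k; have := ltn_ord i; lia.
- rewrite /gG !normrM !norm_conjC [`|u _| * _]mulrC -mulrA ler_wpM2l //.
  rewrite addrC; apply: (le_trans (normM_le _ _)); apply: lerD; apply: win1;
  have := ltn_ord k; have := ltn_ord i; lia.
Qed.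

Lemma winsum (w : int -> C) M (hw : forall s (L : nat), \sum_(n < L) `|w (s + n%:Z)| ^+ 2 <= M) s K :
  \sum_(j < K) Om w (s + ((d + d) * j)%:Z) <= M.
Proof.
suff -> : \sum_(j < K) Om w (s + ((d + d) * j)%:Z) = \sum_(n < (d + d) * K) `|w (s - d%:Z + n%:Z)| ^+ 2 by apply: hw.
elim: K => [|K IH]; first by rewrite big_ord0 muln0 big_ord0.
rewrite big_ord_recr /= IH mulnSr big_split_ord /=; congr (_ + _).
by rewrite /Om; apply: eq_bigr => j _; rewrite PoszD; congr (`|w _| ^+ 2); ring.
Qed.

Lemma winsum_rev (w : int -> C) M (hw : forall s (L : nat), \sum_(n < L) `|w (s + n%:Z)| ^+ 2 <= M) s K :
  \sum_(j < K) Om w (s - ((d + d) * j)%:Z) <= M.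
Proof.
case: K => [|K]; first by have := hw s 0%N; rewrite !big_ord0.
rewrite (reindex_inj rev_ord_inj) /=.
have := @winsum w M hw (s - ((d + d) * K)%:Z) K.+1.
apply: le_trans; rewrite le_eqVlt; apply/orP; left; apply/eqP.
apply: eq_bigr => j _; congr Om.
have hj : (j <= K)%N by have := ltn_ord j; lia.
rewrite subSS mulnBr -subzn; first by ring.
by rewrite leq_mul2l hj orbT.
Qed.
End W.

Theorem lemma5p1 (R : realType) (d : nat) (a : int -> R[i]) (b : int -> R)
    (u v : int -> R[i]) (E : R[i]) :
  (0 < d)%N ->
  (forall k : int, -(d%:Z) <= k <= d%:Z -> a (- k) = Num.conj (a k)) ->
  a d%:Z != 0 ->
  bounded_seq b ->
  in_l2 u -> in_l2 v ->
  (forall n, Lop d a b u n = E * u n) ->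
  (forall n, Lop d a b v n = E * v n) ->
  adjmx (Uvec d u) *m Smx d a *m Uvec d v = 0.
Proof.
move=> d0 ha had hb hu hv Hu Hv.
have [Mu hMu] := @l2C R u hu; have [Mv hMv] := @l2C R v hv.
have Ws := @Wsum R d a ha.
rewrite entry.
have hA : 0 <= Asum R d a by apply: sumr_ge0.
suff -> : W R d a u v d = 0 by apply/matrixP => i j; rewrite !mxE mul0rn.
case: (eqVneq (E - E^*) 0) => hc.
  have Wc : forall n : nat, W R d a u v (d%:Z + n%:Z) = W R d a u v d.
    by move=> n; apply/eqP; rewrite -subr_eq0 (Ws b E u v Hu Hv) hc mul0r.
  apply/normr0_eq0.
  apply: (@arch R _ ((Asum R d a * (Mu + Mv)) *+ (d + d)) (normr_ge0 _)) => K.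
  have -> : `|W R d a u v d| *+ K = \sum_(j < K) `|W R d a u v (d%:Z + ((d + d) * j)%:Z)|.
    by rewrite (eq_bigr (fun _ => `|W R d a u v d|)) ?sumr_const ?card_ord // => j _; rewrite Wc.
  apply: le_trans (ler_sum _ (fun j _ => Wbound R d a u v _)) _.
  rewrite sumrMnl -mulr_sumr big_split /= lerMn2r; apply/orP; right.
  by apply: (ler_wpM2l hA); apply: lerD; [exact: (@winsum R d u Mu hMu) | exact: (@winsum R d v Mv hMv)].
have u0 : forall n0, u n0 = 0.
  move=> n0; apply/eqP.
  suff h : `|E - E^*| * `|u n0| ^+ 2 = 0.
    by move/eqP: h; rewrite mulf_eq0 normr_eq0 (negbTE hc) /= expf_eq0 /= normr_eq0.
  apply: (@arch R _ (((Asum R d a * (Mu + Mu)) *+ (d + d)) *+ 2)).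
    by rewrite mulr_ge0 ?exprn_ge0.
  move=> K.
  pose m := fun j : nat => n0 - ((d + d) * j)%:Z.
  pose nn := fun j : nat => (((d + d) * j) + ((d + d) * j)).+1.
  have step : forall j : nat, `|E - E^*| * `|u n0| ^+ 2 <=
      `|W R d a u u (m j + (nn j)%:Z)| + `|W R d a u u (m j)|.
    move=> j; apply: le_trans (ler_normB _ _).
    rewrite (Ws b E u u Hu Hu) normrM ler_wpM2l //.
    have -> : \sum_(i < nn j) (u (m j + i%:Z))^* * u (m j + i%:Z) =
        \sum_(i < nn j) `|u (m j + i%:Z)| ^+ 2.
      by apply: eq_bigr => i _; rewrite normCK mulrC.
    rewrite ger0_norm; last by apply: sumr_ge0 => i _; rewrite exprn_ge0.
    have hi : ((d + d) * j < nn j)%N by rewrite /nn ltnS leq_addr.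
    have := @single R (nn j) (fun i : 'I_(nn j) => `|u (m j + (nat_of_ord i)%:Z)| ^+ 2)
      (Ordinal hi) (fun i => exprn_ge0 2 (normr_ge0 _)).
    by rewrite /= /m subrK.
  have em : forall j, m j + (nn j)%:Z = (n0 + 1) + ((d + d) * j)%:Z.
    by move=> j; rewrite /m /nn -addn1 !PoszD; ring.
  have -> : (`|E - E^*| * `|u n0| ^+ 2) *+ K = \sum_(j < K) (`|E - E^*| * `|u n0| ^+ 2).
    by rewrite sumr_const card_ord.
  apply: (le_trans (ler_sum _ (fun (j : 'I_K) _ => step j))).
  rewrite big_split /= mulr2n; apply: lerD.
    under eq_bigr do rewrite em.
    apply: le_trans (ler_sum _ (fun j _ => Wbound R d a u u _)) _.
    rewrite sumrMnl -mulr_sumr big_split /= lerMn2r; apply/orP; right.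
    by apply: (ler_wpM2l hA); apply: lerD; exact: (@winsum R d u Mu hMu).
  apply: le_trans (ler_sum _ (fun j _ => Wbound R d a u u _)) _.
  rewrite sumrMnl -mulr_sumr big_split /= lerMn2r; apply/orP; right.
  by apply: (ler_wpM2l hA); apply: lerD; exact: (@winsum_rev R d u Mu hMu).
have h1 : Ts R d (fF R a u v) d = 0.
  by apply: big1 => k _; apply: big1 => i _; rewrite /fF u0 rmorph0 !mul0r.
have h2 : Ts R d (gG R a u v) d = 0.
  by apply: big1 => k _; apply: big1 => i _; rewrite /gG u0 rmorph0 !mul0r.
by rewrite /W h1 h2 subrr.
Qed.
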